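(* Let $a,u\in\mathbb Z$ with $a\ge2$, $|u|\le a$, and let $n$ be a sufficiently large positive integer. Then all $a$ roots of the polynomial $p_u(\tau)=e^{i\pi u}n(\tau-1)^a-\tau^{a-1}$ are given by the (convergent) asymptotic expansions $$\tau_k(u)=1+\sum_{m=1}^\infty\frac{(2-m/a)_{m-1}}{m!}\cdot\frac{e^{\frac{m(2\pi k-\pi u)i}{a}}}{n^{m/a}},\qquad k=0,1,\ldots,a-1.$$
   Context: $(\lambda)_0=1$, $(\lambda)_m=\lambda(\lambda+1)\cdots(\lambda+m-1)$ is the Pochhammer symbol. *)

(* Defs.v *)
From Stdlib Require Import Reals List Arith Factorial.
From Coquelicot Require Import Coquelicot.
Open Scope R_scope.

Fixpoint poch (x : R) (m : nat) : R :=
  match m with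
  | O => 1
  | S m' => poch x m' * (x + INR m')
  end.

Definition cis (t : R) : C := (cos t, sin t).

Definition p_u (a : nat) (u : Z) (n : nat) (tau : C) : C :=
  (cis (PI * IZR u) * RtoC (INR n) * Cpow (tau - 1) a - Cpow tau (a - 1))%C.

Definition tau_term (a : nat) (u : Z) (n k m : nat) : C :=
  (RtoC (poch (2 - INR m / INR a) (m - 1) / INR (fact m))
   * cis (INR m * (2 * PI * INR k - PI * IZR u) / INR a)
   / RtoC (Rpower (INR n) (INR m / INR a)))%C.

Definition tau_seq (a : nat) (u : Z) (n k : nat) : nat -> C :=
  fun j => tau_term a u n k (S j).

Definition root_prod (a : nat) (r : nat -> C) (t : C) : C :=
  fold_right (fun k acc => ((t - r k) * acc)%C) (RtoC 1) (seq 0 a).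

(* Main.v *)
Require Import Defs.
From Stdlib Require Import Reals List Arith Lia ZArith Psatz Factorial.
From Coquelicot Require Import Coquelicot.
Open Scope R_scope.

Fixpoint peval (l : list C) (t : C) : C :=
  match l with nil => RtoC 0 | c :: l' => (c + t * peval l' t)%C end.

Definition is_poly (d : nat) (f : C -> C) :=
  exists l, (length l <= d)%nat /\ forall t, f t = peval l t.

Lemma is_poly_mono d d' f : (d <= d')%nat -> is_poly d f -> is_poly d' f.
Proof. intros H [l [Hl Hf]]. exists l. split; [lia|auto]. Qed.

Lemma is_poly_ext d f g : (forall t, f t = g t) -> is_poly d f -> is_poly d g.
Proof. intros E [l [Hl Hf]]. exists l. split; auto. intros t; rewrite <- E; auto. Qed.

Lemma is_poly_const c : is_poly 1 (fun _ => c).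
Proof. exists (c :: nil). split; simpl; auto. intros t. ring. Qed.

Lemma is_poly_zero d : is_poly d (fun _ => RtoC 0).
Proof. exists nil. split; simpl; [lia|auto]. Qed.

Fixpoint padd (l1 l2 : list C) : list C :=
  match l1, l2 with
  | nil, _ => l2
  | _, nil => l1
  | c1 :: l1', c2 :: l2' => (c1 + c2)%C :: padd l1' l2'
  end.

Lemma padd_eval l1 l2 t : peval (padd l1 l2) t = (peval l1 t + peval l2 t)%C.
Proof.
  revert l2; induction l1 as [|c1 l1 IH]; intros [|c2 l2]; simpl; try ring.
  rewrite IH. ring.
Qed.

Lemma padd_len l1 l2 d : (length l1 <= d)%nat -> (length l2 <= d)%nat -> (length (padd l1 l2) <= d)%nat.
Proof.
  revert l2 d; induction l1 as [|c1 l1 IH]; intros [|c2 l2] d H1 H2; simpl in *; auto.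
  destruct d; [lia|]. specialize (IH l2 d). lia.
Qed.

Lemma is_poly_add d f g : is_poly d f -> is_poly d g -> is_poly d (fun t => f t + g t)%C.
Proof.
  intros [l1 [H1 F1]] [l2 [H2 F2]]. exists (padd l1 l2). split.
  apply padd_len; auto. intros t. rewrite padd_eval, F1, F2. auto.
Qed.

Lemma is_poly_scal d c f : is_poly d f -> is_poly d (fun t => c * f t)%C.
Proof.
  intros [l [H F]]. exists (map (fun x => c * x)%C l). split.
  rewrite length_map; auto.
  intros t. rewrite F. clear. induction l as [|x l IH]; simpl. ring. rewrite <- IH. ring.
Qed.

Lemma is_poly_mulX d f : is_poly d f -> is_poly (S d) (fun t => t * f t)%C.
Proof.
  intros [l [H F]]. exists (RtoC 0 :: l). split. simpl; lia.
  intros t; simpl. rewrite F. ring.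
Qed.

Lemma is_poly_lin d f (al be : C) : is_poly d f -> is_poly (S d) (fun t => (al * t + be) * f t)%C.
Proof.
  intros H. apply is_poly_ext with (fun t => (al * (t * f t)) + be * f t)%C.
  intros; ring.
  apply is_poly_add. apply is_poly_scal, is_poly_mulX; auto.
  apply is_poly_mono with d; [lia|]. apply is_poly_scal; auto.
Qed.

Lemma is_poly_opp d f : is_poly d f -> is_poly d (fun t => - f t)%C.
Proof. intros H. apply is_poly_ext with (fun t => (-1) * f t)%C. intros; ring. apply is_poly_scal; auto. Qed.

Lemma is_poly_sub d f g : is_poly d f -> is_poly d g -> is_poly d (fun t => f t - g t)%C.
Proof. intros H1 H2. apply is_poly_ext with (fun t => f t + - g t)%C. intros; ring.
  apply is_poly_add; auto. apply is_poly_opp; auto. Qed.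

Lemma is_poly_pow m : is_poly (S m) (fun t => Cpow t m).
Proof.
  induction m. apply is_poly_ext with (fun _ => RtoC 1). intros; simpl; auto. apply is_poly_const.
  apply is_poly_ext with (fun t => t * Cpow t m)%C. intros; simpl; auto. apply is_poly_mulX; auto.
Qed.

Lemma pdiv (l : list C) (r : C) : exists l', (length l' <= length l - 1)%nat /\
   forall t, peval l t = (peval l r + (t - r) * peval l' t)%C.
Proof.
  induction l as [|c l IH].
  - exists nil. split; simpl; [lia|]. intros; ring.
  - destruct IH as [l' [Hl F]]. destruct l as [|c0 l0].
    + exists nil. split; simpl; [lia|]. intros; ring.
    + exists (peval (c0 :: l0) r :: l'). split. simpl in *. lia.
      intros t. change ((c + t * peval (c0::l0) t) = (c + r * peval (c0::l0) r) + (t - r) * (peval (c0::l0) r + t * peval l' t))%C. rewrite (F t). ring.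
Qed.

Lemma is_poly_div d f r : is_poly (S d) f -> exists g, is_poly d g /\ forall t, f t = (f r + (t - r) * g t)%C.
Proof.
  intros [l [H F]]. destruct (pdiv l r) as [l' [Hl G]]. exists (fun t => peval l' t). split.
  exists l'. split; [lia|auto]. intros t. rewrite !F. apply G.
Qed.

Lemma is_poly_roots (rs : list C) : forall d (f : C -> C), NoDup rs -> length rs = d ->
  (forall r, In r rs -> f r = 0%C) -> is_poly d f -> forall t, f t = 0%C.
Proof.
  induction rs as [|r rs IH]; intros d f ND Hl Hr Hp t.
  - simpl in Hl; subst d. destruct Hp as [l [H F]]. destruct l; simpl in H; [|lia].
    rewrite F; auto.
  - simpl in Hl. subst d. destruct (is_poly_div _ _ r Hp) as [g [Hg G]].
    rewrite (G t), Hr by (left; auto).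
    inversion ND; subst.
    assert (Hg0 : forall t, g t = 0%C).
    { apply (IH (length rs)); auto. intros r' Hin. pose proof (Hr r (or_introl eq_refl)) as Hr0. specialize (Hr r' (or_intror Hin)).
      rewrite G, Hr0 in Hr. 
      assert (Hne : (r' - r)%C <> 0%C). { intros E. apply H1. assert (r' = r) as <-. { replace r' with (r' - r + r)%C by ring. rewrite E. ring. } auto. }
      replace (g r') with ((0 + (r' - r) * g r') / (r' - r))%C by (field; auto). rewrite Hr. unfold Cdiv. ring. }
    rewrite Hg0. ring.
Qed.

Fixpoint Cpoch (y : C) (k : nat) : C :=
  match k with O => RtoC 1 | S k' => (Cpoch y k' * (y + RtoC (INR k')))%C end.

Definition Acoef (t x : C) (m : nat) : C :=
  match m with
  | O => RtoC 1
  | S m' => (x * Cpoch (x + t * RtoC (INR m) - RtoC (INR m) + 1) m' / RtoC (INR (fact m)))%C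
  end.

Lemma RtoC_INR_S k : RtoC (INR (S k)) = (RtoC (INR k) + 1)%C.
Proof. rewrite S_INR, <- RtoC_plus. auto. Qed.

Lemma INR_fact_nz k : RtoC (INR (fact k)) <> 0%C.
Proof. intros E. apply RtoC_inj in E. apply (INR_fact_neq_0 k). auto. Qed.

Lemma Cpoch_shift y k : Cpoch y (S k) = (y * Cpoch (y + 1) k)%C.
Proof.
  induction k. simpl. ring.
  change (Cpoch y (S (S k))) with (Cpoch y (S k) * (y + RtoC (INR (S k))))%C.
  rewrite IHk. change (Cpoch (y+1) (S k)) with (Cpoch (y+1) k * (y + 1 + RtoC (INR k)))%C.
  rewrite RtoC_INR_S. ring.
Qed.

Lemma fact_SS k : RtoC (INR (fact (S k))) = (RtoC (INR (S k)) * RtoC (INR (fact k)))%C.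
Proof. rewrite fact_simpl, mult_INR, RtoC_mult. auto. Qed.

Lemma Acoef_diff t x n :
  (Acoef t x (S n) - Acoef t (x - 1) (S n) = Acoef t (x - 1 + t) n)%C.
Proof.
  destruct n as [|n].
  - simpl. replace (RtoC (INR 1)) with (RtoC 1) by (simpl; auto).
    field; try apply C1_nz.
  - unfold Acoef.
    set (y := (x + t * RtoC (INR (S (S n))) - RtoC (INR (S (S n))) + 1)%C).
    replace (x - 1 + t * RtoC (INR (S (S n))) - RtoC (INR (S (S n))) + 1)%C with (y - 1)%C by (unfold y; ring).
    replace (x - 1 + t + t * RtoC (INR (S n)) - RtoC (INR (S n)) + 1)%C with y
      by (unfold y; rewrite !RtoC_INR_S; ring).
    rewrite (Cpoch_shift (y - 1)). replace (y - 1 + 1)%C with y by ring.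
    change (Cpoch y (S n)) with (Cpoch y n * (y + RtoC (INR n)))%C.
    rewrite (fact_SS (S n)).
    assert (Hf := INR_fact_nz (S n)).
    assert (Hs : RtoC (INR (S (S n))) <> 0%C).
    { intros E; apply RtoC_inj in E. apply (not_0_INR (S (S n))); auto. }
    remember (Cpoch y n) as P.
    unfold y. rewrite !RtoC_INR_S. rewrite !RtoC_INR_S in Hs.
    field. split; auto.
Qed.

Fixpoint csum (f : nat -> C) (n : nat) : C :=
  match n with O => RtoC 0 | S n' => (csum f n' + f n')%C end.

Lemma csum_ext f g n : (forall k, (k < n)%nat -> f k = g k) -> csum f n = csum g n.
Proof. induction n; intros H; simpl; auto. rewrite IHn, H; auto. Qed.

Lemma csum_minus f g n : (csum f n - csum g n)%C = csum (fun k => f k - g k)%C n.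
Proof. induction n; simpl. ring. rewrite <- IHn. ring. Qed.

Lemma csum_zero n : csum (fun _ => RtoC 0) n = RtoC 0.
Proof. induction n; simpl; auto. rewrite IHn. ring. Qed.

Lemma is_poly_csum d (F : nat -> C -> C) n :
  (forall k, is_poly d (F k)) -> is_poly d (fun y => csum (fun k => F k y) n).
Proof.
  intros H. induction n; simpl. apply is_poly_zero. apply is_poly_add; auto.
Qed.

Lemma is_poly_Cpoch k : forall c, is_poly (S k) (fun y => Cpoch (y + c) k).
Proof.
  induction k; intros c. apply is_poly_ext with (fun _ => RtoC 1). intros; auto. apply is_poly_const.
  apply is_poly_ext with (fun y => (1 * y + (c + RtoC (INR k))) * Cpoch (y + c) k)%C.
  intros; simpl; ring. apply is_poly_lin; auto.
Qed.

Lemma is_poly_A t m c : is_poly (S m) (fun y => Acoef t (y + c) m).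
Proof.
  destruct m. apply is_poly_ext with (fun _ => RtoC 1). intros; auto. apply is_poly_const.
  set (c' := (c + t * RtoC (INR (S m)) - RtoC (INR (S m)) + 1)%C).
  apply is_poly_ext with (fun y => (/ RtoC (INR (fact (S m)))) * ((1 * y + c) * Cpoch (y + c') m))%C.
  intros y. unfold Acoef, c'. unfold Cdiv.
  replace (y + c + t * RtoC (INR (S m)) - RtoC (INR (S m)) + 1)%C
   with (y + (c + t * RtoC (INR (S m)) - RtoC (INR (S m)) + 1))%C by ring. ring.
  apply is_poly_scal. apply is_poly_lin. apply is_poly_Cpoch.
Qed.

Lemma Acoef_0 t m : Acoef t 0 (S m) = 0%C.
Proof. simpl Acoef. unfold Cdiv. ring. Qed.

Definition Dconv t x y n := csum (fun k => Acoef t x k * Acoef t y (n - k))%C (S n).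

Lemma INR_roots_nodup m : NoDup (map (fun j => RtoC (INR j)) (seq 0 m)).
Proof.
  apply NoDup_map_NoDup_ForallPairs. intros i j _ _ E. apply RtoC_inj in E. apply INR_eq; auto.
  apply seq_NoDup.
Qed.

Theorem rothe_hagen t n : forall x y, Dconv t x y n = Acoef t (x + y) n.
Proof.
  induction n as [|n IH]; intros x y.
  - unfold Dconv. simpl. ring.
  - set (E := fun y => (Dconv t x y (S n) - Acoef t (x + y) (S n))%C).
    assert (HP : is_poly (S (S n)) E).
    { apply is_poly_sub.
      - unfold Dconv. apply is_poly_csum. intros k.
        apply is_poly_scal. apply is_poly_mono with (S (S n - k)). lia.
        apply is_poly_ext with (fun y => Acoef t (y + 0) (S n - k)).
        intros; rewrite Cplus_0_r; auto. apply is_poly_A.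
      - apply is_poly_ext with (fun y => Acoef t (y + x) (S n)).
        intros; rewrite Cplus_comm; auto. apply is_poly_A. }
    assert (HE : forall y, E y = E (y - 1)%C).
    { intros y0. unfold E. apply Ceq_minus.
      replace (Dconv t x y0 (S n) - Acoef t (x + y0) (S n) -
         (Dconv t x (y0 - 1) (S n) - Acoef t (x + (y0 - 1)) (S n)))%C
       with ((Dconv t x y0 (S n) - Dconv t x (y0 - 1) (S n)) -
             (Acoef t (x + y0) (S n) - Acoef t (x + y0 - 1) (S n)))%C
       by (replace (x + (y0 - 1))%C with (x + y0 - 1)%C by ring; ring).
      rewrite Acoef_diff. unfold Dconv. rewrite csum_minus.
      change (csum (fun k => Acoef t x k * Acoef t y0 (S n - k) - Acoef t x k * Acoef t (y0 - 1) (S n - k))%C (S (S n)))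
        with (csum (fun k => Acoef t x k * Acoef t y0 (S n - k) - Acoef t x k * Acoef t (y0 - 1) (S n - k))%C (S n)
          + (Acoef t x (S n) * Acoef t y0 (S n - S n) - Acoef t x (S n) * Acoef t (y0 - 1) (S n - S n)))%C.
      rewrite Nat.sub_diag.
      rewrite (csum_ext _ (fun k => Acoef t x k * Acoef t (y0 - 1 + t) (n - k))%C).
      + fold (Dconv t x (y0 - 1 + t) n). rewrite IH. change (Acoef t y0 0) with (RtoC 1). change (Acoef t (y0 - 1) 0) with (RtoC 1).
        replace (x + (y0 - 1 + t))%C with (x + y0 - 1 + t)%C by ring. ring.
      + intros k Hk. replace (S n - k)%nat with (S (n - k)) by lia.
        rewrite <- Acoef_diff. ring. }
    assert (H0 : E 0%C = 0%C).
    { unfold E, Dconv. change (csum (fun k => Acoef t x k * Acoef t 0 (S n - k))%C (S (S n)))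
        with (csum (fun k => Acoef t x k * Acoef t 0 (S n - k))%C (S n) + Acoef t x (S n) * Acoef t 0 (S n - S n))%C.
      rewrite (csum_ext _ (fun _ => RtoC 0)). rewrite csum_zero, Nat.sub_diag, Cplus_0_r. simpl Acoef at 2. ring.
      intros k Hk. replace (S n - k)%nat with (S (n - k)) by lia. rewrite Acoef_0. ring. }
    assert (Hnat : forall j, E (RtoC (INR j)) = 0%C).
    { induction j. simpl. auto. rewrite HE. rewrite RtoC_INR_S. replace (RtoC (INR j) + 1 - 1)%C with (RtoC (INR j)) by ring. auto. }
    assert (Hz := is_poly_roots (map (fun j => RtoC (INR j)) (seq 0 (S (S n)))) (S (S n)) E
       (INR_roots_nodup _) ltac:(rewrite length_map, length_seq; auto)
       ltac:(intros r Hin; apply in_map_iff in Hin; destruct Hin as [j [<- _]]; apply Hnat) HP y).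
    unfold E in Hz. apply Ceq_minus. auto.
Qed.

Definition CSeries (a : nat -> C) : C :=
  (Series (fun n => Re (a n)), Series (fun n => Im (a n))).

Lemma sum_n_Re (a : nat -> C) N : Re (sum_n a N) = sum_n (fun n => Re (a n)) N.
Proof. induction N. rewrite !sum_O. auto. rewrite !sum_Sn. rewrite <- IHN. auto. Qed.
Lemma sum_n_Im (a : nat -> C) N : Im (sum_n a N) = sum_n (fun n => Im (a n)) N.
Proof. induction N. rewrite !sum_O. auto. rewrite !sum_Sn. rewrite <- IHN. auto. Qed.

Lemma CSeries_correct (a : nat -> C) :
  ex_series (fun n => Re (a n)) -> ex_series (fun n => Im (a n)) -> is_series a (CSeries a).
Proof.
  intros H1 H2. apply Series_correct in H1. apply Series_correct in H2.
  unfold is_series in *. apply filterlim_locally. intros eps.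
  pose proof (proj1 (filterlim_locally (F:=eventually) _ _) H1 eps) as B1.
  pose proof (proj1 (filterlim_locally (F:=eventually) _ _) H2 eps) as B2.
  clear H1 H2. rename B1 into H1. rename B2 into H2.
  generalize (filter_and _ _ H1 H2). apply filter_imp. intros N [B1 B2].
  split; [change (ball (Re (CSeries a)) eps (Re (sum_n a N))); rewrite sum_n_Re; exact B1 | change (ball (Im (CSeries a)) eps (Im (sum_n a N))); rewrite sum_n_Im; exact B2].
Qed.

Definition CAbs (a : nat -> C) := ex_series (fun n => Cmod (a n)).

Lemma im_le_Cmod c : Rabs (Im c) <= Cmod c.
Proof. unfold Cmod. destruct c as [x y]; simpl. rewrite <- sqrt_Rsqr_abs. apply sqrt_le_1_alt.
  unfold Rsqr. simpl. nra. Qed.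

Lemma CAbs_Re_abs a : CAbs a -> ex_series (fun n => Rabs (Re (a n))).
Proof. intros H. apply (ex_series_le (K:=R_AbsRing) (V:=R_CompleteNormedModule) _ (fun n => Cmod (a n))); auto.
  intros n. change (Rabs (Rabs (Re (a n))) <= Cmod (a n)). rewrite Rabs_Rabsolu. apply re_le_Cmod. Qed.
Lemma CAbs_Im_abs a : CAbs a -> ex_series (fun n => Rabs (Im (a n))).
Proof. intros H. apply (ex_series_le (K:=R_AbsRing) (V:=R_CompleteNormedModule) _ (fun n => Cmod (a n))); auto.
  intros n. change (Rabs (Rabs (Im (a n))) <= Cmod (a n)). rewrite Rabs_Rabsolu. apply im_le_Cmod. Qed.
Lemma CAbs_Re a : CAbs a -> ex_series (fun n => Re (a n)).
Proof. intros; apply ex_series_Rabs, CAbs_Re_abs; auto. Qed.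
Lemma CAbs_Im a : CAbs a -> ex_series (fun n => Im (a n)).
Proof. intros; apply ex_series_Rabs, CAbs_Im_abs; auto. Qed.

Lemma CSeries_ext a b : (forall n, a n = b n) -> CSeries a = CSeries b.
Proof. intros H. unfold CSeries. f_equal; apply Series_ext; intros; rewrite H; auto. Qed.

Lemma CAbs_ext a b : (forall n, a n = b n) -> CAbs a -> CAbs b.
Proof. intros H. unfold CAbs. apply ex_series_ext. intros; rewrite H; auto. Qed.

Lemma CSeries_incr a : CAbs a -> CSeries a = (a 0%nat + CSeries (fun n => a (S n)))%C.
Proof.
  intros H. unfold CSeries. rewrite (Series_incr_1 (fun n => Re (a n))) by (apply CAbs_Re; auto).
  rewrite (Series_incr_1 (fun n => Im (a n))) by (apply CAbs_Im; auto). destruct (a 0%nat); auto.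
Qed.

Lemma CSeries_scal c a : CAbs a -> CSeries (fun n => c * a n)%C = (c * CSeries a)%C.
Proof.
  intros H. unfold CSeries. destruct c as [cr ci].
  assert (E1 := CAbs_Re a H). assert (E2 := CAbs_Im a H).
  rewrite (Series_ext _ (fun n => cr * Re (a n) - ci * Im (a n))) by (intros; destruct (a n); simpl; ring).
  rewrite (Series_ext (fun n => Im _) (fun n => cr * Im (a n) + ci * Re (a n))) by (intros; destruct (a n); simpl; ring).
  rewrite Series_minus, Series_plus, !Series_scal_l.
  unfold Cmult; simpl. f_equal; ring.
  all: apply (ex_series_scal_l (V:=R_NormedModule)); auto.
Qed.

Lemma csum_Re f n : Re (csum f (S n)) = sum_f_R0 (fun k => Re (f k)) n.
Proof. induction n. simpl. destruct (f 0%nat); simpl; ring. change (Re (csum f (S n) + f (S n))%C = sum_f_R0 (fun k => Re (f k)) n + Re (f (S n))).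
  rewrite <- IHn. destruct (csum f (S n)), (f (S n)); simpl; auto. Qed.
Lemma csum_Im f n : Im (csum f (S n)) = sum_f_R0 (fun k => Im (f k)) n.
Proof. induction n. simpl. destruct (f 0%nat); simpl; ring. change (Im (csum f (S n) + f (S n))%C = sum_f_R0 (fun k => Im (f k)) n + Im (f (S n))).
  rewrite <- IHn. destruct (csum f (S n)), (f (S n)); simpl; auto. Qed.

Lemma sum_f_R0_minus f g n : sum_f_R0 (fun k => f k - g k) n = sum_f_R0 f n - sum_f_R0 g n.
Proof. induction n; simpl; [ring|]. rewrite IHn; ring. Qed.
Lemma sum_f_R0_plus f g n : sum_f_R0 (fun k => f k + g k) n = sum_f_R0 f n + sum_f_R0 g n.
Proof. induction n; simpl; [ring|]. rewrite IHn; ring. Qed.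

Definition conv (a b : nat -> C) (n : nat) : C := csum (fun k => a k * b (n - k)%nat)%C (S n).

Lemma CSeries_mult a b : CAbs a -> CAbs b -> CSeries (conv a b) = (CSeries a * CSeries b)%C.
Proof.
  intros Ha Hb.
  assert (RR := is_series_mult _ _ _ _ (Series_correct _ (CAbs_Re a Ha)) (Series_correct _ (CAbs_Re b Hb)) (CAbs_Re_abs a Ha) (CAbs_Re_abs b Hb)).
  assert (II := is_series_mult _ _ _ _ (Series_correct _ (CAbs_Im a Ha)) (Series_correct _ (CAbs_Im b Hb)) (CAbs_Im_abs a Ha) (CAbs_Im_abs b Hb)).
  assert (RI := is_series_mult _ _ _ _ (Series_correct _ (CAbs_Re a Ha)) (Series_correct _ (CAbs_Im b Hb)) (CAbs_Re_abs a Ha) (CAbs_Im_abs b Hb)).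
  assert (IR := is_series_mult _ _ _ _ (Series_correct _ (CAbs_Im a Ha)) (Series_correct _ (CAbs_Re b Hb)) (CAbs_Im_abs a Ha) (CAbs_Re_abs b Hb)).
  unfold CSeries. unfold Cmult at 1. cbn [fst snd]. f_equal.
  - apply is_series_unique. assert (H := is_series_minus _ _ _ _ RR II).
    revert H. apply is_series_ext. intros n. unfold conv. rewrite csum_Re.
    change (plus ?x (opp ?y)) with (x - y). rewrite <- sum_f_R0_minus. apply sum_eq.
    intros i _. destruct (a i), (b (n - i)%nat); simpl; ring.
  - apply is_series_unique. assert (H := is_series_plus _ _ _ _ RI IR).
    revert H. apply is_series_ext. intros n. unfold conv. rewrite csum_Im.
    change (plus ?x ?y) with (x + y). rewrite <- sum_f_R0_plus. apply sum_eq.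
    intros i _. destruct (a i), (b (n - i)%nat); simpl; ring.
Qed.

Lemma Series_zero : Series (fun _ => 0) = 0.
Proof. rewrite (Series_ext _ (fun n => 0 * 0)) by (intros; ring). rewrite Series_scal_l. ring. Qed.
Lemma ex_series_zero : ex_series (fun _ : nat => 0).
Proof. apply ex_series_ext with (fun n => scal 0 ((/2)^n)). intros; unfold scal; simpl; unfold mult; simpl; ring.
  apply (ex_series_scal_l (V:=R_NormedModule)). apply ex_series_geom. rewrite Rabs_pos_eq; lra. Qed.

Lemma CSeries_unit a : a 0%nat = RtoC 1 -> (forall n, a (S n) = RtoC 0) -> CSeries a = RtoC 1.
Proof.
  intros H0 HS. assert (HA : CAbs a). { unfold CAbs. apply ex_series_incr_1.
    apply ex_series_ext with (fun _ => 0). intros n; rewrite HS, Cmod_0; auto. apply ex_series_zero. }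
  rewrite CSeries_incr by auto. rewrite (CSeries_ext _ (fun _ => RtoC 0)) by auto.
  unfold CSeries. cbn [fst snd Re Im]. rewrite re_RtoC, im_RtoC, Series_zero, H0.
  assert (E : ((0:R),(0:R)) = RtoC 0) by reflexivity. rewrite E. ring.
Qed.

Lemma exp_pow_n x n : exp x ^ n = exp (INR n * x).
Proof. induction n. simpl. rewrite Rmult_0_l, exp_0. auto.
  rewrite S_INR. simpl. rewrite IHn. rewrite <- exp_plus. f_equal. ring. Qed.

Lemma succ_pow_bound m : (1 <= m)%nat -> (INR m + 1) ^ m <= 3 * INR m ^ m.
Proof.
  intros Hm. assert (Hp : 0 < INR m) by (apply lt_0_INR; lia).
  replace (INR m + 1) with (INR m * (1 + / INR m)) by (field; lra).
  rewrite Rpow_mult_distr. rewrite Rmult_comm. apply Rmult_le_compat_r. apply pow_le; lra.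
  apply Rle_trans with (exp (/ INR m) ^ m).
  apply pow_incr. split. assert (0 < / INR m) by (apply Rinv_0_lt_compat; auto). lra.
  left. apply exp_ineq1. apply Rinv_neq_0_compat; lra.
  rewrite exp_pow_n. replace (INR m * / INR m) with 1 by (field; lra). apply exp_le_3.
Qed.

Lemma pow_fact_bound m : INR m ^ m <= 3 ^ m * INR (fact m).
Proof.
  induction m. simpl. lra.
  destruct m. simpl. lra.
  set (k := S m) in *.
  assert (E1 : INR (S k) = INR k + 1) by apply S_INR.
  assert (E2 : INR (fact (S k)) = (INR k + 1) * INR (fact k)) by (rewrite fact_simpl, mult_INR, S_INR; auto).
  rewrite E1, E2. change ((INR k + 1) ^ S k) with ((INR k + 1) * (INR k + 1) ^ k).
  change (3 ^ S k) with (3 * 3 ^ k).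
  assert (H := succ_pow_bound k ltac:(unfold k; lia)).
  assert (0 <= INR k) by apply pos_INR.
  apply Rle_trans with ((INR k + 1) * (3 * INR k ^ k)).
  apply Rmult_le_compat_l; lra. nra.
Qed.

Lemma Cpoch_bound y k B : 0 <= B -> (forall i, (i < k)%nat -> Cmod (y + RtoC (INR i)) <= B) ->
  Cmod (Cpoch y k) <= B ^ k.
Proof.
  intros HB. induction k; intros H. simpl. rewrite Cmod_1. lra.
  simpl Cpoch. rewrite Cmod_mult. simpl pow. rewrite Rmult_comm.
  apply Rmult_le_compat. apply Cmod_ge_0. apply Cmod_ge_0. apply H; lia. apply IHk. intros; apply H; lia.
Qed.

Lemma A_bound tr x X m : 0 <= tr <= 1 -> Cmod x <= X ->
  Cmod (Acoef (RtoC tr) x m) <= (X + 1) * (3 * (X + 2)) ^ m.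
Proof.
  intros Ht Hx. assert (HX : 0 <= X) by (apply Rle_trans with (Cmod x); auto; apply Cmod_ge_0).
  destruct m as [|m].
  - simpl. rewrite Cmod_1. lra.
  - unfold Acoef. set (M := S m).
    assert (HM : 1 <= INR M) by (unfold M; rewrite S_INR; generalize (pos_INR m); lra).
    assert (Hb : Cmod (Cpoch (x + RtoC tr * RtoC (INR M) - RtoC (INR M) + 1) m) <= ((X + 2) * INR M) ^ m).
    { apply Cpoch_bound. nra. intros i Hi.
      replace (x + RtoC tr * RtoC (INR M) - RtoC (INR M) + 1 + RtoC (INR i))%C
        with (x + RtoC ((tr - 1) * INR M + 1 + INR i))%C
        by (destruct x; unfold Cminus, Cplus, Cmult, Copp, RtoC; simpl; f_equal; ring).
      apply Rle_trans with (Cmod x + Cmod (RtoC ((tr - 1) * INR M + 1 + INR i))). apply Cmod_triangle.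
      rewrite Cmod_R. assert (Hi' : INR i + 1 <= INR m) by (rewrite <- S_INR; apply le_INR; lia).
      assert (INR M = INR m + 1) by (unfold M; apply S_INR).
      assert (0 <= INR i) by apply pos_INR.
      apply Rle_trans with (X + INR M). apply Rplus_le_compat; auto.
      apply Rabs_le. split; nra. nra. }
    rewrite Cmod_div by apply INR_fact_nz. rewrite Cmod_mult, Cmod_R, Rabs_pos_eq by apply pos_INR.
    assert (HF : 0 < INR (fact M)) by (apply lt_0_INR, lt_O_fact).
    assert (HPF := pow_fact_bound M).
    apply Rle_trans with (X * ((X + 2) * INR M) ^ m / INR (fact M)).
    { unfold Rdiv. apply Rmult_le_compat_r. left; apply Rinv_0_lt_compat; auto.
      apply Rmult_le_compat; auto; apply Cmod_ge_0. }
    rewrite Rpow_mult_distr.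
    assert (E : INR M ^ m * INR M = INR M ^ M) by (unfold M; simpl; ring).
    assert (H1 : INR M ^ m <= 3 ^ M * INR (fact M)).
    { apply Rle_trans with (INR M ^ M); auto. rewrite <- E. 
      assert (0 <= INR M ^ m) by (apply pow_le; lra). nra. }
    assert (H2 : (X + 2) ^ m <= (X + 2) ^ M) by (apply Rle_pow; [lra | unfold M; lia]).
    assert (0 <= (X+2)^m) by (apply pow_le; lra).
    assert (0 <= INR M ^ m) by (apply pow_le; lra).
    rewrite Rpow_mult_distr.
    apply Rle_trans with (X * ((X + 2) ^ M * 3 ^ M)).
    { unfold Rdiv. rewrite Rmult_assoc. apply Rmult_le_compat_l; auto.
      apply (Rmult_le_reg_r (INR (fact M))); auto. rewrite Rmult_assoc, Rmult_assoc, Rinv_l by lra.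
      rewrite Rmult_1_r. rewrite Rmult_assoc. apply Rmult_le_compat; auto. }
    assert (0 <= (X + 2) ^ M * 3 ^ M) by (apply Rmult_le_pos; apply pow_le; lra). nra.
Qed.

Definition Aterm (t x z : C) (m : nat) : C := (Acoef t x m * Cpow z m)%C.
Definition T (t x z : C) : C := CSeries (Aterm t x z).

Lemma Aterm_bound tr x X z m : 0 <= tr <= 1 -> Cmod x <= X ->
  Cmod (Aterm (RtoC tr) x z m) <= (X + 1) * (3 * (X + 2) * Cmod z) ^ m.
Proof.
  intros Ht Hx. unfold Aterm. rewrite Cmod_mult, Cmod_pow.
  replace ((X + 1) * (3 * (X + 2) * Cmod z) ^ m) with (((X + 1) * (3 * (X + 2)) ^ m) * Cmod z ^ m)
    by (rewrite (Rpow_mult_distr (3 * (X + 2))); ring).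
  apply Rmult_le_compat. apply Cmod_ge_0. apply pow_le, Cmod_ge_0.
  apply A_bound; auto. lra.
Qed.

Lemma ex_series_geom_scal c q : 0 <= q < 1 -> ex_series (fun n => c * q ^ n).
Proof. intros H. apply (ex_series_scal_l (V:=R_NormedModule)). apply ex_series_geom. rewrite Rabs_pos_eq; lra. Qed.

Lemma CAbs_Aterm tr x X z : 0 <= tr <= 1 -> Cmod x <= X -> 3 * (X + 2) * Cmod z <= /2 ->
  CAbs (Aterm (RtoC tr) x z).
Proof.
  intros Ht Hx Hq. unfold CAbs.
  assert (HX : 0 <= X) by (apply Rle_trans with (Cmod x); auto; apply Cmod_ge_0).
  apply (ex_series_le (K:=R_AbsRing) (V:=R_CompleteNormedModule) _ (fun n => (X + 1) * (3 * (X + 2) * Cmod z) ^ n)).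
  intros n. change (Rabs (Cmod (Aterm tr x z n)) <= (X + 1) * (3 * (X + 2) * Cmod z) ^ n).
  rewrite Rabs_pos_eq by apply Cmod_ge_0. apply Aterm_bound; auto.
  apply ex_series_geom_scal. split. assert (0 <= Cmod z) by apply Cmod_ge_0. nra. lra.
Qed.

Lemma csum_scal c f n : csum (fun k => c * f k)%C n = (c * csum f n)%C.
Proof. induction n; simpl. ring. rewrite IHn. ring. Qed.

Lemma T_mult t x y z : CAbs (Aterm t x z) -> CAbs (Aterm t y z) -> (T t x z * T t y z)%C = T t (x + y) z.
Proof.
  intros Hx Hy. unfold T. rewrite <- CSeries_mult by auto. apply CSeries_ext. intros n.
  unfold conv, Aterm. rewrite <- rothe_hagen. unfold Dconv.
  rewrite (csum_ext _ (fun k => Cpow z n * (Acoef t x k * Acoef t y (n - k)))%C).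
  rewrite csum_scal. ring.
  intros k Hk. replace (Cpow z n) with (Cpow z k * Cpow z (n - k))%C.
  ring. rewrite <- Cpow_add_r. f_equal. lia.
Qed.

Lemma T_zero t z : T t (RtoC 0) z = RtoC 1.
Proof.
  unfold T. apply CSeries_unit. unfold Aterm. simpl. ring.
  intros n. unfold Aterm. rewrite Acoef_0. ring.
Qed.

Lemma T_pow tr x X z : 0 <= tr <= 1 -> 3 * (X + 2) * Cmod z <= /2 ->
  forall j, Cmod (RtoC (INR j) * x) <= X -> Cmod x <= X ->
  Cpow (T (RtoC tr) x z) j = T (RtoC tr) (RtoC (INR j) * x) z.
Proof.
  intros Ht Hq j. induction j; intros Hj Hx.
  - simpl. replace (RtoC 0 * x)%C with (RtoC 0) by ring. rewrite T_zero. auto.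
  - rewrite Cpow_S. assert (Hj' : Cmod (RtoC (INR j) * x) <= X).
    { apply Rle_trans with (Cmod (RtoC (INR (S j)) * x)); auto. rewrite !Cmod_mult, !Cmod_R.
      rewrite !Rabs_pos_eq by apply pos_INR. apply Rmult_le_compat_r. apply Cmod_ge_0. apply le_INR; lia. }
    rewrite IHj by auto. rewrite T_mult. f_equal. rewrite RtoC_INR_S. ring.
    apply CAbs_Aterm with X; auto. apply CAbs_Aterm with X; auto.
Qed.

Lemma T1_rec tr z : 0 <= tr <= 1 -> 3 * (1 + 2) * Cmod z <= /2 ->
  T (RtoC tr) (RtoC 1) z = (RtoC 1 + z * T (RtoC tr) (RtoC tr) z)%C.
Proof.
  intros Ht Hq. unfold T.
  assert (H1 : CAbs (Aterm tr 1 z)) by (apply CAbs_Aterm with 1; auto; rewrite Cmod_1; lra).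
  assert (H2 : CAbs (Aterm tr tr z)) by (apply CAbs_Aterm with 1; auto; rewrite Cmod_R, Rabs_pos_eq; lra).
  rewrite CSeries_incr by auto. rewrite <- CSeries_scal by auto. f_equal.
  unfold Aterm; simpl; ring.
  apply CSeries_ext. intros n. unfold Aterm.
  assert (E := Acoef_diff tr 1 n).
  replace (RtoC 1 - 1)%C with (RtoC 0) in E by ring. rewrite Acoef_0 in E.
  replace (RtoC 0 + RtoC tr)%C with (RtoC tr) in E by ring.
  rewrite Cpow_S. replace (Acoef tr 1 (S n)) with (Acoef tr tr n). ring.
  rewrite <- E. ring.
Qed.

Lemma cis_mult x y : (cis x * cis y)%C = cis (x + y).
Proof. unfold cis, Cmult. simpl. rewrite cos_plus, sin_plus. f_equal; ring. Qed.

Lemma cis_pow x m : Cpow (cis x) m = cis (INR m * x).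
Proof. induction m. simpl. unfold cis. rewrite Rmult_0_l, cos_0, sin_0. auto.
  rewrite Cpow_S, IHm, cis_mult, S_INR. f_equal. ring. Qed.

Lemma Cmod_cis x : Cmod (cis x) = 1.
Proof. unfold Cmod, cis. cbn [fst snd]. replace (cos x ^ 2 + sin x ^ 2) with 1. apply sqrt_1. generalize (sin2_cos2 x). unfold Rsqr. intros; nra. Qed.

Lemma cis_2PI k : cis (2 * PI * INR k) = RtoC 1.
Proof. unfold cis. replace (2 * PI * INR k) with (0 + 2 * INR k * PI) by ring.
  rewrite cos_period, sin_period, cos_0, sin_0. auto. Qed.

Lemma Cmod_cis_1 x : Cmod (cis x - 1) = sqrt (2 - 2 * cos x).
Proof. unfold Cmod, cis. simpl. f_equal. generalize (sin2_cos2 x). unfold Rsqr. intros. nra. Qed.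

Lemma cos_2PI_a_lt a : (2 <= a)%nat -> cos (2 * PI / INR a) < 1.
Proof.
  intros Ha. assert (HA : 2 <= INR a) by (replace 2 with (INR 2) by (simpl; lra); apply le_INR; auto).
  assert (HP := PI_RGT_0). rewrite <- cos_0. apply cos_decreasing_1; try lra.
  - apply Rmult_le_pos. generalize PI_RGT_0; lra. left; apply Rinv_0_lt_compat; lra.
  - apply (Rmult_le_reg_r (INR a)). lra. unfold Rdiv. rewrite Rmult_assoc, Rinv_l by lra. generalize PI_RGT_0; nra.
  - apply Rmult_lt_0_compat. generalize PI_RGT_0; lra. apply Rinv_0_lt_compat; lra.
Qed.

Lemma cos_le_dec x y : 0 <= x -> x <= y -> y <= PI -> cos y <= cos x.
Proof. intros. destruct (Req_dec x y). subst; lra. left; apply cos_decreasing_1; lra. Qed.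

Lemma cos_2PI_d a d : (2 <= a)%nat -> (1 <= d)%nat -> (d < a)%nat ->
  cos (2 * PI * INR d / INR a) <= cos (2 * PI / INR a).
Proof.
  intros Ha H1 H2. assert (HA : 2 <= INR a) by (replace 2 with (INR 2) by (simpl; lra); apply le_INR; auto).
  assert (HP := PI_RGT_0).
  assert (Hd1 : 1 <= INR d) by (replace 1 with (INR 1) by (simpl; lra); apply le_INR; auto).
  assert (Hd2 : INR d + 1 <= INR a) by (rewrite <- S_INR; apply le_INR; lia).
  assert (Hx : 0 <= 2 * PI / INR a <= PI).
  { split. apply Rmult_le_pos. lra. left; apply Rinv_0_lt_compat; lra.
    apply (Rmult_le_reg_r (INR a)). lra. unfold Rdiv. rewrite Rmult_assoc, Rinv_l by lra. nra. }
  destruct (Rle_dec (2 * PI * INR d / INR a) PI) as [Hle|Hgt].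
  - apply cos_le_dec; try lra.
    apply Rmult_le_compat_r. left; apply Rinv_0_lt_compat; lra. nra.
  - replace (2 * PI * INR d / INR a) with (- (2 * PI * (INR a - INR d) / INR a) + 2 * INR 1 * PI)
      by (simpl; field; lra).
    rewrite cos_period, cos_neg.
    assert (Hin : 2 * PI * (INR a - INR d) / INR a < PI).
    { apply Rnot_le_lt in Hgt. apply (Rmult_lt_reg_r (INR a)). lra. unfold Rdiv. rewrite Rmult_assoc, Rinv_l by lra.
      apply (Rmult_lt_compat_r (INR a)) in Hgt; [|lra]. unfold Rdiv in Hgt. rewrite Rmult_assoc, Rinv_l in Hgt by lra. nra. }
    apply cos_le_dec; try lra.
    apply Rmult_le_compat_r. left; apply Rinv_0_lt_compat; lra. nra.
Qed.

Definition delta (a : nat) : R := sqrt (2 - 2 * cos (2 * PI / INR a)).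

Lemma delta_pos a : (2 <= a)%nat -> 0 < delta a.
Proof. intros Ha. unfold delta. apply sqrt_lt_R0. generalize (cos_2PI_a_lt a Ha). lra. Qed.

Lemma cis_sep a th0 j k : (2 <= a)%nat -> (j < a)%nat -> (k < a)%nat -> j <> k ->
  delta a <= Cmod (cis (th0 + 2 * PI * INR j / INR a) - cis (th0 + 2 * PI * INR k / INR a)).
Proof.
  intros Ha Hj Hk Hjk.
  assert (HA : 2 <= INR a) by (replace 2 with (INR 2) by (simpl; lra); apply le_INR; auto).
  replace (cis (th0 + 2 * PI * INR j / INR a) - cis (th0 + 2 * PI * INR k / INR a))%C
    with (cis (th0 + 2 * PI * INR k / INR a) * (cis (2 * PI * (INR j - INR k) / INR a) - 1))%C.
  2: { replace (th0 + 2 * PI * INR j / INR a) with ((th0 + 2 * PI * INR k / INR a) + 2 * PI * (INR j - INR k) / INR a) by (field; lra).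
       rewrite <- (cis_mult (th0 + 2 * PI * INR k / INR a) (2 * PI * (INR j - INR k) / INR a)). ring. }
  rewrite Cmod_mult, Cmod_cis, Rmult_1_l, Cmod_cis_1. unfold delta. apply sqrt_le_1_alt.
  assert (cos (2 * PI * (INR j - INR k) / INR a) <= cos (2 * PI / INR a)); [|lra].
  destruct (Nat.lt_ge_cases k j).
  - rewrite <- minus_INR by lia. apply cos_2PI_d; lia.
  - replace (2 * PI * (INR j - INR k) / INR a) with (- (2 * PI * (INR k - INR j) / INR a)) by (field; lra).
    rewrite cos_neg. rewrite <- minus_INR by lia. apply cos_2PI_d; lia.
Qed.

Lemma fold_prod_poly (L : list nat) (r : nat -> C) :
  is_poly (length L) (fun t => fold_right (fun k acc => ((t - r k) * acc)%C) (RtoC 1) L - Cpow t (length L))%C.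
Proof.
  induction L as [|k L IH]; simpl.
  - apply is_poly_ext with (fun _ => RtoC 0). intros; simpl; ring. apply is_poly_zero.
  - apply is_poly_ext with (fun t => (- r k) * Cpow t (length L) + (1 * t + - r k) * (fold_right (fun k acc => ((t - r k) * acc)%C) (RtoC 1) L - Cpow t (length L)))%C.
    intros t. ring.
    apply is_poly_add. apply is_poly_scal, is_poly_pow. apply is_poly_lin; auto.
Qed.

Lemma fold_prod_zero (L : list nat) (r : nat -> C) k : In k L ->
  fold_right (fun j acc => ((r k - r j) * acc)%C) (RtoC 1) L = RtoC 0.
Proof.
  induction L as [|j L IH]; simpl; intros H. contradiction.
  destruct H as [->|H]. ring. rewrite IH by auto. ring.
Qed.

Lemma pow_sub_poly m : is_poly m (fun t => Cpow (t - 1) m - Cpow t m)%C.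
Proof.
  induction m; simpl.
  - apply is_poly_ext with (fun _ => RtoC 0). intros; simpl; ring. apply is_poly_zero.
  - apply is_poly_ext with (fun t => (-1) * Cpow t m + (1 * t + -1) * (Cpow (t - 1) m - Cpow t m))%C.
    intros t. ring.
    apply is_poly_add. apply is_poly_scal, is_poly_pow. apply is_poly_lin; auto.
Qed.

Lemma factorization a u n (tau : nat -> C) : (1 <= a)%nat ->
  (forall j k, (j < a)%nat -> (k < a)%nat -> j <> k -> tau j <> tau k) ->
  (forall k, (k < a)%nat -> p_u a u n (tau k) = RtoC 0) ->
  forall t, p_u a u n t = (cis (PI * IZR u) * RtoC (INR n) * root_prod a tau t)%C.
Proof.
  intros Ha Hd Hr. set (c := (cis (PI * IZR u) * RtoC (INR n))%C).
  set (Q := fun t => (p_u a u n t - c * root_prod a tau t)%C).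
  assert (HQ : is_poly a Q).
  { unfold Q, p_u, root_prod. fold c.
    apply is_poly_ext with (fun t => c * (Cpow (t - 1) a - Cpow t a) - Cpow t (a - 1)
       - c * (fold_right (fun k acc => ((t - tau k) * acc)%C) (RtoC 1) (seq 0 a) - Cpow t (length (seq 0 a))))%C.
    intros t. rewrite length_seq. ring.
    apply is_poly_sub. apply is_poly_sub. apply is_poly_scal, pow_sub_poly.
    replace a with (S (a - 1)) at 1 by lia. apply is_poly_pow.
    apply is_poly_scal. rewrite <- (length_seq a 0) at 1. apply fold_prod_poly. }
  assert (HZ := is_poly_roots (map tau (seq 0 a)) a Q).
  intros t. apply Ceq_minus. apply HZ; auto.
  - apply NoDup_map_NoDup_ForallPairs. intros i j Hi Hj E. apply in_seq in Hi. apply in_seq in Hj.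
    destruct (Nat.eq_dec i j); auto. exfalso. apply (Hd i j); lia || auto.
    apply seq_NoDup.
  - rewrite length_map, length_seq; auto.
  - intros r Hin. apply in_map_iff in Hin. destruct Hin as [k [<- Hk]].
    unfold Q. rewrite Hr by (apply in_seq in Hk; lia). unfold root_prod. rewrite fold_prod_zero by auto. ring.
Qed.

Lemma Cmod_le_parts c : Cmod c <= Rabs (Re c) + Rabs (Im c).
Proof.
  unfold Cmod. destruct c as [x y]. cbn [fst snd Re Im].
  rewrite <- (sqrt_pow2 (Rabs x + Rabs y)) by (generalize (Rabs_pos x) (Rabs_pos y); lra).
  apply sqrt_le_1_alt. generalize (Rabs_pos x) (Rabs_pos y). intros.
  rewrite <- (pow2_abs x), <- (pow2_abs y). nra.
Qed.

Lemma Cmod_CSeries a : CAbs a -> Cmod (CSeries a) <= 2 * Series (fun n => Cmod (a n)).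
Proof.
  intros H. apply Rle_trans with (Rabs (Re (CSeries a)) + Rabs (Im (CSeries a))). apply Cmod_le_parts.
  unfold CSeries. cbn [Re Im fst snd].
  assert (H1 := Series_Rabs _ (CAbs_Re_abs a H)). assert (H2 := Series_Rabs _ (CAbs_Im_abs a H)).
  assert (H3 : Series (fun n => Rabs (Re (a n))) <= Series (fun n => Cmod (a n))).
  { apply Series_le; auto. intros; split. apply Rabs_pos. apply re_le_Cmod. }
  assert (H4 : Series (fun n => Rabs (Im (a n))) <= Series (fun n => Cmod (a n))).
  { apply Series_le; auto. intros; split. apply Rabs_pos. apply im_le_Cmod. }
  lra.
Qed.

Lemma T_minus1 tr x X z : 0 <= tr <= 1 -> Cmod x <= X -> 3 * (X + 2) * Cmod z <= /2 ->
  Cmod (T (RtoC tr) x z - 1) <= 4 * (X + 1) * (3 * (X + 2) * Cmod z).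
Proof.
  intros Ht Hx Hq. set (q := 3 * (X + 2) * Cmod z) in *.
  assert (HX : 0 <= X) by (apply Rle_trans with (Cmod x); auto; apply Cmod_ge_0).
  assert (Hq0 : 0 <= q) by (unfold q; assert (0 <= Cmod z) by apply Cmod_ge_0; nra).
  assert (HA := CAbs_Aterm tr x X z Ht Hx Hq).
  unfold T. rewrite CSeries_incr by auto.
  replace (Aterm tr x z 0 + CSeries (fun n => Aterm tr x z (S n)) - 1)%C with (CSeries (fun n => Aterm tr x z (S n)))
    by (unfold Aterm; simpl; ring).
  assert (HA' : CAbs (fun n => Aterm tr x z (S n))) by (apply (ex_series_incr_1 (V:=R_NormedModule)) in HA; exact HA).
  apply Rle_trans with (2 * Series (fun n => Cmod (Aterm tr x z (S n)))). apply Cmod_CSeries; auto.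
  assert (HS : Series (fun n => Cmod (Aterm tr x z (S n))) <= Series (fun n => ((X + 1) * q) * q ^ n)).
  { apply Series_le. intros n; split. apply Cmod_ge_0.
    replace ((X + 1) * q * q ^ n) with ((X + 1) * q ^ (S n)) by (simpl; ring). apply Aterm_bound; auto.
    apply ex_series_geom_scal. lra. }
  rewrite Series_scal_l, Series_geom in HS by (rewrite Rabs_pos_eq; lra).
  assert ((X + 1) * q * / (1 - q) <= 2 * (X + 1) * q).
  { assert (/ (1 - q) <= 2). { replace 2 with (/ / 2) by (field). apply Rinv_le_contravar; lra. }
    assert (0 <= (X + 1) * q) by nra. nra. }
  lra.
Qed.

Lemma poch_RtoC y j : RtoC (poch y j) = Cpoch (RtoC y) j.
Proof. induction j; simpl; auto. rewrite <- IHj, <- RtoC_plus, <- RtoC_mult. auto. Qed.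

Lemma INR_pos_a a : (2 <= a)%nat -> 0 < INR a.
Proof. intros; apply lt_0_INR; lia. Qed.

Lemma tau_term_eq a u n k j : (2 <= a)%nat -> (1 <= n)%nat ->
  let r := Rpower (INR n) (/ INR a) in
  let th := (2 * PI * INR k - PI * IZR u) / INR a in
  tau_term a u n k (S j) = Aterm (RtoC (1 - / INR a)) (RtoC 1) (cis th * RtoC (/ r))%C (S j).
Proof.
  intros Ha Hn r th.
  assert (HA := INR_pos_a a Ha). assert (HN : 0 < INR n) by (apply lt_0_INR; lia).
  assert (Hr : 0 < r) by (unfold r, Rpower; apply exp_pos).
  unfold tau_term, Aterm.
  change (Acoef ?t ?x (S j)) with (x * Cpoch (x + t * RtoC (INR (S j)) - RtoC (INR (S j)) + 1) j / RtoC (INR (fact (S j))))%C.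
  set (m := S j).
  replace (m - 1)%nat with j by (unfold m; lia).
  replace (RtoC 1 + RtoC (1 - / INR a) * RtoC (INR m) - RtoC (INR m) + 1)%C with (RtoC (2 - INR m / INR a)).
  2: { rewrite <- RtoC_mult, <- !RtoC_plus, <- RtoC_minus, <- RtoC_plus. f_equal. field. lra. }
  rewrite <- poch_RtoC. rewrite Cpow_mult_l, cis_pow, <- RtoC_pow, pow_inv.
  replace (r ^ m) with (Rpower (INR n) (INR m / INR a)).
  2: { unfold r. rewrite <- Rpower_pow by auto. rewrite Rpower_mult. f_equal. field. lra. }
  replace (INR m * th) with (INR m * (2 * PI * INR k - PI * IZR u) / INR a) by (unfold th; field; lra).
  assert (HP : 0 < Rpower (INR n) (INR m / INR a)) by (unfold Rpower; apply exp_pos).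
  assert (HF : 0 < INR (fact m)) by (apply lt_0_INR, lt_O_fact).
  rewrite RtoC_div by lra. rewrite RtoC_inv by lra.
  field. split; intros E; apply RtoC_inj in E; lra.
Qed.

Lemma Cmod_tri3 A B : Cmod (RtoC 0 - A + B) <= Cmod A + Cmod B.
Proof. replace (RtoC 0 - A + B)%C with (- A + B)%C by ring.
  apply Rle_trans with (Cmod (- A) + Cmod B). apply Cmod_triangle. rewrite Cmod_opp. lra. Qed.

Theorem lemma7 (a : nat) (u : Z) :
  (2 <= a)%nat -> (Z.abs u <= Z.of_nat a)%Z ->
  exists N : nat, forall n : nat, (N <= n)%nat -> (1 <= n)%nat ->
    exists tau : nat -> C,
      (forall k : nat, (k < a)%nat -> is_series (tau_seq a u n k) (tau k - 1)%C) /\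
      (forall t : C,
         p_u a u n t = (cis (PI * IZR u) * RtoC (INR n) * root_prod a tau t)%C).
Proof.
  intros Ha _.
  assert (HA := INR_pos_a a Ha).
  assert (HA2 : 2 <= INR a) by (replace 2 with (INR 2) by (simpl; lra); apply le_INR; auto).
  set (tr := 1 - / INR a).
  assert (Ht : 0 <= tr <= 1).
  { unfold tr. assert (0 < / INR a) by (apply Rinv_0_lt_compat; lra).
    assert (/ INR a <= 1). { replace 1 with (/ 1) by field. apply Rinv_le_contravar; lra. } lra. }
  assert (Hd := delta_pos a Ha). set (dl := delta a) in *.
  set (e0 := Rmin (/ (6 * (INR a + 2))) (dl / 200)).
  assert (He0 : 0 < e0).
  { unfold e0. apply Rmin_glb_lt. apply Rinv_0_lt_compat; lra. lra. }
  destruct (INR_unbounded ((/ e0) ^ a)) as [N HN].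
  exists N. intros n HnN Hn1.
  assert (HNn : INR N <= INR n) by (apply le_INR; auto).
  assert (Hn : 0 < INR n) by (apply lt_0_INR; lia).
  set (r := Rpower (INR n) (/ INR a)).
  assert (Hr : 0 < r) by (unfold r, Rpower; apply exp_pos).
  assert (Hra : r ^ a = INR n).
  { unfold r. rewrite <- Rpower_pow by (unfold Rpower; apply exp_pos). rewrite Rpower_mult.
    replace (/ INR a * INR a) with 1 by (field; lra). apply Rpower_1; auto. }
  set (eps := / r).
  assert (Heps : 0 < eps) by (apply Rinv_0_lt_compat; auto).
  assert (Hie : 0 < / e0) by (apply Rinv_0_lt_compat; auto).
  assert (Hele : eps <= e0).
  { assert (H1 : / e0 <= r).
    { assert (Hp : 0 < (/ e0) ^ a) by (apply pow_lt; auto).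
      apply Rle_trans with (Rpower ((/ e0) ^ a) (/ INR a)).
      - rewrite <- Rpower_pow by auto. rewrite Rpower_mult. replace (INR a * / INR a) with 1 by (field; lra).
        rewrite Rpower_1 by auto. lra.
      - apply Rle_Rpower_l. left; apply Rinv_0_lt_compat; lra. lra. }
    unfold eps. rewrite <- (Rinv_inv e0). apply Rinv_le_contravar; auto. }
  assert (He1 : eps <= / (6 * (INR a + 2))) by (apply Rle_trans with e0; auto; apply Rmin_l).
  assert (He2 : eps <= dl / 200) by (apply Rle_trans with e0; auto; apply Rmin_r).
  set (th := fun k => (2 * PI * INR k - PI * IZR u) / INR a).
  set (z := fun k => (cis (th k) * RtoC eps)%C).
  assert (Hz : forall k, Cmod (z k) = eps).
  { intros k. unfold z. rewrite Cmod_mult, Cmod_cis, Cmod_R, Rabs_pos_eq; lra. }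
  assert (Hq : forall k, 3 * (INR a + 2) * Cmod (z k) <= / 2).
  { intros k. rewrite Hz. apply (Rmult_le_compat_l (3 * (INR a + 2))) in He1; [|lra].
    replace (3 * (INR a + 2) * / (6 * (INR a + 2))) with (/2) in He1 by (field; lra). lra. }
  assert (Hq1 : forall k, 3 * (1 + 2) * Cmod (z k) <= / 2).
  { intros k. apply Rle_trans with (3 * (INR a + 2) * Cmod (z k)); auto.
    apply Rmult_le_compat_r. apply Cmod_ge_0. lra. }
  set (tau := fun k => T (RtoC tr) (RtoC 1) (z k)).
  exists tau. split.
  - intros k Hk.
    assert (HA1 : CAbs (Aterm tr 1 (z k))) by (apply CAbs_Aterm with 1; auto; rewrite Cmod_1; lra).
    assert (HS := CSeries_correct _ (CAbs_Re _ HA1) (CAbs_Im _ HA1)).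
    apply is_series_ext with (fun j => Aterm tr 1 (z k) (S j)).
    { intros j. unfold tau_seq. rewrite tau_term_eq by auto. auto. }
    apply is_series_incr_1.
    match goal with |- is_series _ ?L => replace L with (CSeries (Aterm tr 1 (z k))) end. exact HS.
    unfold tau, T, Aterm. simpl. change plus with Cplus. ring.
  - apply factorization. lia.
    +
      intros j k Hj Hk Hjk E.
      assert (Htt : Cmod (RtoC tr) <= 1) by (rewrite Cmod_R, Rabs_pos_eq; lra).
      assert (B : forall i, Cmod (T (RtoC tr) (RtoC tr) (z i) - 1) <= 72 * eps).
      { intros i. apply Rle_trans with (4 * (1 + 1) * (3 * (1 + 2) * Cmod (z i))).
        apply T_minus1; auto. rewrite Hz. lra. }
      assert (Ej := T1_rec tr (z j) Ht (Hq1 j)). assert (Ek := T1_rec tr (z k) Ht (Hq1 k)).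
      unfold tau in E. rewrite Ej, Ek in E.
      set (Tj := T (RtoC tr) (RtoC tr) (z j)) in *. set (Tk := T (RtoC tr) (RtoC tr) (z k)) in *.
      assert (HD : dl * eps <= Cmod (z j - z k)).
      { unfold z. replace (cis (th j) * RtoC eps - cis (th k) * RtoC eps)%C with ((cis (th j) - cis (th k)) * RtoC eps)%C by ring.
        rewrite Cmod_mult, Cmod_R, Rabs_pos_eq by lra. apply Rmult_le_compat_r. lra.
        replace (th j) with (- PI * IZR u / INR a + 2 * PI * INR j / INR a) by (unfold th; field; lra).
        replace (th k) with (- PI * IZR u / INR a + 2 * PI * INR k / INR a) by (unfold th; field; lra).
        apply cis_sep; auto. }
      replace (z j - z k)%C with ((z j * Tj - z k * Tk) - z j * (Tj - 1) + z k * (Tk - 1))%C in HD by ring.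
      replace (z j * Tj - z k * Tk)%C with (RtoC 0) in HD.
      2: { apply (f_equal (fun x => x - 1)%C) in E. replace (RtoC 0) with ((RtoC 1 + z j * Tj - 1) - (RtoC 1 + z k * Tk - 1))%C by (rewrite E; ring). ring. }
      assert (T3 := Cmod_tri3 (z j * (Tj - 1)) (z k * (Tk - 1))).
      rewrite !Cmod_mult, !Hz in T3.
      assert (Bj := B j). assert (Bk := B k). fold Tj in Bj. fold Tk in Bk.
      assert (dl * eps <= eps * (72 * eps) + eps * (72 * eps)).
      { apply Rle_trans with (eps * Cmod (Tj - 1) + eps * Cmod (Tk - 1)). lra.
        apply Rplus_le_compat; apply Rmult_le_compat_l; lra. }
      nra.
    +
      intros k Hk. unfold p_u.
      assert (Ek := T1_rec tr (z k) Ht (Hq1 k)).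
      replace (tau k - 1)%C with (z k * T (RtoC tr) (RtoC tr) (z k))%C by (unfold tau; rewrite Ek; ring).
      rewrite Cpow_mult_l.
      assert (HX1 : Cmod (RtoC tr) <= INR a) by (rewrite Cmod_R, Rabs_pos_eq; lra).
      rewrite (T_pow tr (RtoC tr) (INR a) (z k) Ht (Hq k) a).
      2: { rewrite <- RtoC_mult, Cmod_R, Rabs_pos_eq by (apply Rmult_le_pos; lra). nra. }
      2: auto.
      replace (RtoC (INR a) * RtoC tr)%C with (RtoC (INR (a - 1)) * RtoC 1)%C.
      2: { rewrite <- !RtoC_mult. f_equal. rewrite minus_INR by lia. unfold tr. simpl. field. lra. }
      rewrite <- (T_pow tr (RtoC 1) (INR a) (z k) Ht (Hq k) (a - 1)).
      2: { rewrite <- RtoC_mult, Cmod_R, Rabs_pos_eq. rewrite minus_INR by lia. simpl; lra.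
           apply Rmult_le_pos. apply pos_INR. lra. }
      2: { rewrite Cmod_1. lra. }
      fold (tau k).
      unfold z. rewrite Cpow_mult_l, cis_pow, <- RtoC_pow. unfold eps. rewrite pow_inv, Hra.
      replace (INR a * th k) with (2 * PI * INR k - PI * IZR u) by (unfold th; field; lra).
      assert (E : (cis (PI * IZR u) * cis (2 * PI * INR k - PI * IZR u))%C = RtoC 1).
      { rewrite cis_mult. replace (PI * IZR u + (2 * PI * INR k - PI * IZR u)) with (2 * PI * INR k) by ring.
        apply cis_2PI. }
      replace (cis (PI * IZR u) * RtoC (INR n) * (cis (2 * PI * INR k - PI * IZR u) * RtoC (/ INR n) * Cpow (tau k) (a - 1)) - Cpow (tau k) (a - 1))%C
        with ((cis (PI * IZR u) * cis (2 * PI * INR k - PI * IZR u)) * (RtoC (INR n) * RtoC (/ INR n)) * Cpow (tau k) (a - 1) - Cpow (tau k) (a - 1))%C by ring.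
      rewrite E, <- RtoC_mult, Rinv_r by lra. ring.
Qed.
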